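(* Let $0<k<n$. Suppose that $M(\pi_{k,n})$ contains a non-saturated subset. Then $M(\pi_{k,n+k})$ contains a non-saturated subset.
   Context: For integers $0<k<n$: $\varepsilon_1,\dots,\varepsilon_n$ is the standard basis of $\mathbb Q^n$, $e_i=\varepsilon_i-\frac1n(1,\dots,1)\in\mathbb Q^n$ (so $e_1+\dots+e_n=0$), and $M(\pi_{k,n})=\{e_{i_1}+\dots+e_{i_k}\mid 1\le i_1<\dots<i_k\le n\}$ (the set of $T$-weights of $\Lambda^k\Bbbk^n$ for $SL(n)$). A finite set $\{v_1,\dots,v_m\}$ is saturated if $\mathbb Z_+(v_1,\dots,v_m)=\mathbb Z(v_1,\dots,v_m)\cap\mathbb Q_+(v_1,\dots,v_m)$ (combinations with non-negative integer, integer, non-negative rational coefficients respectively); otherwise it is non-saturated. *)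

(* Defs.v *)
From HB Require Import structures.
From mathcomp Require Import all_boot all_order all_algebra.
Set Implicit Arguments. Unset Strict Implicit. Unset Printing Implicit Defensive.
Import Order.TTheory GRing.Theory Num.Theory.
Local Open Scope ring_scope.

Definition evec (n : nat) (i : 'I_n) : 'rV[rat]_n :=
  delta_mx 0 i - (n%:R)^-1 *: const_mx 1.

(* v \in M(pi_{k,n}) : v = e_{i_1} + ... + e_{i_k} with i_1 < ... < i_k *)
Definition inM (k : nat) (n : nat) (v : 'rV[rat]_n) : Prop :=
  exists S : {set 'I_n}, #|S| = k /\ v = \sum_(i in S) evec i.

Arguments inM k n v : clear implicits.

Definition inZplus (n : nat) (s : seq 'rV[rat]_n) (v : 'rV[rat]_n) : Prop :=
  exists c : 'I_(size s) -> nat, v = \sum_(i < size s) (c i)%:R *: s`_i.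
Definition inZspan (n : nat) (s : seq 'rV[rat]_n) (v : 'rV[rat]_n) : Prop :=
  exists c : 'I_(size s) -> int, v = \sum_(i < size s) (c i)%:~R *: s`_i.
Definition inQplus (n : nat) (s : seq 'rV[rat]_n) (v : 'rV[rat]_n) : Prop :=
  exists c : 'I_(size s) -> rat,
    (forall i, 0 <= c i) /\ v = \sum_(i < size s) c i *: s`_i.

(* Z_+(s) = Z(s) ∩ Q_+(s) ; the inclusion ⊆ is automatic *)
Definition saturated (n : nat) (s : seq 'rV[rat]_n) : Prop :=
  forall v, inZspan s v -> inQplus s v -> inZplus s v.

(* Main.v *)
Require Import Defs.
From HB Require Import structures.
From mathcomp Require Import all_boot all_order all_algebra.
From Stdlib Require Import Classical.
Set Implicit Arguments. Unset Strict Implicit. Unset Printing Implicit Defensive.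
Import Order.TTheory GRing.Theory Num.Theory.
Local Open Scope ring_scope.

Lemma sum_evecE n (S : {set 'I_n}) r j :
  (\sum_(i in S) evec i) r j = (j \in S)%:R - #|S|%:R / n%:R.
Proof.
rewrite (ord1 r) summxE.
under eq_bigr do rewrite /evec !mxE eqxx /= mulr1.
rewrite sumrB sumr_const -[_ *+ _]mulr_natl mulrC; congr (_ - _).
case: (boolP (j \in S)) => jS.
  rewrite (bigD1 j) //= eqxx big1 ?addr0 // => i /andP[_ H].
  by rewrite eq_sym (negbTE H).
rewrite big1 // => i iS; case: eqP => // eij; by rewrite eij iS in jS.
Qed.

Lemma lshift_rshift m n (i : 'I_m) (j : 'I_n) : (lshift n i == rshift m j) = false.
Proof. apply/eqP => /(congr1 val) /= e; have := ltn_ord i; rewrite e; by rewrite ltnNge leq_addr. Qed.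
Section S.
Variables (k n : nat).
Hypothesis (hk : (0 < k)%N) (hn : (0 < n)%N).

Definition T0 : {set 'I_(n+k)} := [set rshift n j | j : 'I_k].
Definition w0 : 'rV[rat]_(n+k) := \sum_(i in T0) evec i.
Definition liftv (w : 'rV[rat]_n) : 'rV[rat]_(n+k) := row_mx w 0 - (k%:R / n%:R) *: w0.

Lemma card_T0 : #|T0| = k.
Proof. by rewrite card_imset ?card_ord //; apply: rshift_inj. Qed.

Lemma w0E r j : w0 r j = (j \in T0)%:R - k%:R / (n+k)%:R.
Proof. by rewrite /w0 sum_evecE card_T0. Qed.

Lemma key : k%:R / n%:R * (1 - k%:R / (n+k)%:R) = k%:R / (n+k)%:R :> rat.
Proof.
have hN : (n+k)%:R != 0 :> rat by rewrite pnatr_eq0 -lt0n addn_gt0 hn.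
have hn0 : n%:R != 0 :> rat by rewrite pnatr_eq0 -lt0n.
have -> : 1 - k%:R / (n+k)%:R = n%:R / (n+k)%:R :> rat.
  by rewrite -{1}(divff hN) -mulrBl natrD addrK.
by rewrite mulrA divfK.
Qed.

Lemma T0_l j : (lshift k j \in T0) = false.
Proof. apply/imsetP => [[i _ /eqP]]; by rewrite lshift_rshift. Qed.

Lemma T0_r j : (rshift n j \in T0).
Proof. by apply/imsetP; exists j. Qed.

Lemma liftv_inM w : inM k n w -> inM k (n+k) (liftv w).
Proof.
move=> [S [cS ->]].
exists [set lshift k i | i in S]; split.
  by rewrite card_imset //; apply: lshift_inj.
apply/matrixP => i j; rewrite !mxE !sum_evecE card_T0 card_imset; last by apply: lshift_inj.
rewrite -(splitK j); case: (split j) => j'; rewrite unsplitK /=.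
  rewrite sum_evecE cS T0_l (mem_imset _ _ (@lshift_inj _ _)).
  rewrite (_ : false%:R = 0) // sub0r mulrN opprK -[in RHS]key mulrBr mulr1 opprB addrA.
  by rewrite addrAC.
rewrite mxE T0_r cS.
have -> : (rshift n j' \in [set lshift k i | i in S]) = false.
  by apply/imsetP => [[x _ /eqP]]; rewrite eq_sym lshift_rshift.
by rewrite -[in RHS]key (_ : false%:R = 0) // !sub0r.
Qed.

Lemma pad_sum m (F : 'I_m -> 'rV[rat]_n) :
  \sum_j row_mx (F j) (0 : 'rV[rat]_k) = row_mx (\sum_j F j) 0.
Proof.
symmetry; apply: (big_morph (fun x : 'rV[rat]_n => row_mx x (0:'rV[rat]_k))).
  by move=> a b; rewrite add_row_mx addr0.
by rewrite row_mx0.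
Qed.

Lemma liftv_sum m (d : 'I_m -> rat) (x : 'I_m -> 'rV[rat]_n) :
  \sum_j d j *: liftv (x j) =
  row_mx (\sum_j d j *: x j) 0 - (k%:R / n%:R * \sum_j d j) *: w0.
Proof.
rewrite /liftv.
under eq_bigr => j _ do rewrite scalerBr scale_row_mx scaler0 scalerA.
rewrite sumrB pad_sum mulr_sumr scaler_suml.
by congr (_ - _); apply: eq_bigr => i _; rewrite mulrC.
Qed.

Lemma one_sub_neq0 : 1 - k%:R / (n+k)%:R != 0 :> rat.
Proof.
apply/eqP => h; have := key; rewrite h mulr0 => /esym/eqP.
rewrite mulf_eq0 invr_eq0 !pnatr_eq0 addn_eq0 => /orP [/eqP e|/andP [_ /eqP e]];
  by move: hk; rewrite e.
Qed.

Lemma lift_inj v x b1 b2 :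
  row_mx v 0 + b1 *: w0 = row_mx x 0 + b2 *: w0 -> v = x.
Proof.
move=> E.
have := congr1 (fun M : 'rV[rat]_(n+k) => M 0 (unsplit (inr (Ordinal hk)))) E.
rewrite !mxE unsplitK /= !mxE !sum_evecE card_T0.
rewrite (T0_r (Ordinal hk)) !add0r => /mulIf => /(_ one_sub_neq0) eb.
move: E; rewrite eb => /addIr /eq_row_mx [] //.
Qed.
End S.

Lemma sum_cast (V : zmodType) m m' (E : m = m') (G : 'I_m -> V) :
  \sum_(i < m) G i = \sum_(j < m') G (cast_ord (esym E) j).
Proof. by case: m' / E; apply: eq_bigr => j _; rewrite cast_ord_id. Qed.

Lemma mk_coef (X : Type) (x0 : X) m (f : 'I_m -> X) :
  exists g : 'I_m.+1 -> X, g ord0 = x0 /\ forall j, g (lift ord0 j) = f j.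
Proof.
exists (fun i => match unlift ord0 i with Some j => f j | None => x0 end).
by rewrite unlift_none; split => // j; rewrite liftK.
Qed.

Lemma alg N (x y : 'rV[rat]_N) a b : a *: y + (x - b *: y) = x + (a - b) *: y.
Proof. by rewrite scalerBl addrCA. Qed.

Lemma sum_t k n (s : seq 'rV[rat]_n)
   (F : 'I_(size (w0 k n :: map (@liftv k n) s)) -> rat) :
  \sum_i F i *: (w0 k n :: map (@liftv k n) s)`_i =
  F ord0 *: w0 k n + \sum_(j < size s)
     F (lift ord0 (cast_ord (esym (size_map (@liftv k n) s)) j)) *: @liftv k n s`_j.
Proof.
rewrite big_ord_recl /=; congr (_ + _).
rewrite (sum_cast (size_map (@liftv k n) s)); apply: eq_bigr => j _.
congr (_ *: _); by rewrite /= (nth_map 0) // ltn_ord.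
Qed.

Theorem lemma5 (k n : nat) (hk : (0 < k)%N) (hkn : (k < n)%N) :
  (exists s : seq 'rV[rat]_n, (forall v, v \in s -> inM k n v) /\ ~ saturated s) ->
  exists s : seq 'rV[rat]_(n + k), (forall v, v \in s -> inM k (n + k) v) /\ ~ saturated s.
Proof.
move=> [s [Hs nsat]].
have hn : (0 < n)%N by apply: leq_trans hkn.
have [v] : exists v, ~ (inZspan s v -> inQplus s v -> inZplus s v).
  by apply: not_all_ex_not.
move=> H; have [[a Ha] [[q [q0 Hq]] nZ]] :
   inZspan s v /\ inQplus s v /\ ~ inZplus s v by tauto.
clear H nsat.
exists (w0 k n :: map (@liftv k n) s); split.
  move=> x; rewrite inE => /orP [/eqP ->|/mapP [w ws ->]].
    by exists (T0 k n); rewrite card_T0.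
  by apply: liftv_inM => //; apply: Hs.
move=> sat.
pose E := size_map (@liftv k n) s.
pose kap : rat := k%:R / n%:R.
pose A : rat := \sum_j (a j)%:~R.
pose Q : rat := \sum_j q j.
pose al : int := `| \sum_j a j |.
pose v' := row_mx v 0 + (al%:~R - kap * A) *: w0 k n.
have [g [g0 gl]] := mk_coef al (fun i => a (cast_ord E i)).
have [h [h0 hl]] := mk_coef (al%:~R - kap * A + kap * Q) (fun i => q (cast_ord E i)).
have kap0 : 0 <= kap by rewrite divr_ge0 ?ler0n.
have kap1 : kap <= 1 by rewrite ler_pdivrMr ?ltr0n // mul1r ler_nat ltnW.
have [m Hm] : inZplus (w0 k n :: map (@liftv k n) s) v'.
  apply: sat.
    exists g; rewrite sum_t g0.
    under eq_bigr do rewrite gl cast_ordKV.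
    by rewrite liftv_sum alg -Ha.
  exists h; split.
    move=> i; case: (unliftP ord0 i) => [j ->|->]; first by rewrite hl.
    rewrite h0 addr_ge0 //; last by apply: mulr_ge0 => //; apply: sumr_ge0.
    rewrite subr_ge0 /al intr_norm rmorph_sum -/A.
    apply: (le_trans (ler_norm _)); rewrite normrM (ger0_norm kap0).
    by apply: ler_piMl.
  rewrite sum_t h0.
  under eq_bigr do rewrite hl cast_ordKV.
  by rewrite liftv_sum alg -Hq /v' -/kap -/Q addrK.
apply: nZ.
move: Hm; rewrite sum_t liftv_sum alg /v' => /lift_inj -> //.
by exists (fun j => m (lift ord0 (cast_ord (esym E) j))).
Qed.
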